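(* Let $\mathcal{E}=\{|\varphi_i\rangle,p_i\}_{i\in\mathcal I}$ be a finite ensemble of pure states on $\mathbb{C}^d$. Let $\{a_k\}_{k\in\mathcal K}$ be a finite probability distribution, and let $U_k$ be unitary operators on $\mathbb{C}^d$. Let $\mathcal F$ be the ensemble $\{U_k|\varphi_i\rangle,\ p_ia_k\}_{(i,k)\in\mathcal I\times\mathcal K}$. Then for every $R\ge0$, $M(\mathcal{E},R)\le M(\mathcal F,R)$.
   Context: For a finite pure-state ensemble $\mathcal G=\{|\chi_x\rangle,s_x\}_{x\in\mathcal X}$, define $M(\mathcal G,R)$ as follows. For a finite set $\mathcal J$ and conditional distribution $p(j|x)$, let $\rho^{ABC}=\sum_xs_x|x\rangle\langle x|\otimes|\chi_x\rangle\langle\chi_x|\otimes\sum_jp(j|x)|j\rangle\langle j|$, with $S(A:C)=S(A)+S(C)-S(AC)$ and $S(A:B|C)=S(AC)+S(BC)-S(ABC)-S(C)$ (von Neumann entropies, base 2). Then $M(\mathcal G,R)=\inf\{S(A:B|C):S(A:C)\le R\}$ over all finite $\mathcal J$ and conditional distributions. *)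

(* Defs.v *)
From HB Require Import structures.
From mathcomp Require Import all_boot all_order all_algebra.
From mathcomp Require Import all_classical all_reals.
From mathcomp Require Import constructive_ereal ereal exp.
From mathcomp Require Import complex.
Set Implicit Arguments. Unset Strict Implicit. Unset Printing Implicit Defensive.
Import Order.TTheory GRing.Theory Num.Theory.
Local Open Scope ring_scope.
Local Open Scope complex_scope.

Section Q.
Variable R : realType.
Local Notation C := R[i].

Definition op (T : finType) := T -> T -> C.

Definition unitary (T : finType) (U : op T) : Prop :=
  forall i j, \sum_k U i k * (U j k)^* = (i == j)%:R.

Definition spectral (T : finType) (rho : op T) (lam : T -> R) : Prop :=
  exists U : op T, unitary U /\
    forall i j, rho i j = \sum_k U i k * (lam k)%:C * (U j k)^*.

Definition log2 (x : R) : R := ln x / ln 2.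
Definition eta (x : R) : R := if 0 < x then - (x * log2 x) else 0.

Definition shannon (T : finType) (lam : T -> R) : R := \sum_k eta (lam k).

(* von Neumann entropy S(rho) = - tr (rho log2 rho), computed from a spectral
   decomposition rho = U diag(lam) U^* (U unitary); the eigenvalue list lam is
   determined up to permutation, so the value does not depend on the choice.
   (Junk value 0 for operators without such a decomposition, never used.) *)
Definition vN_entropy (T : finType) (rho : op T) : R :=
  match pselect (exists lam, spectral rho lam) with
  | left H => shannon (projT1 (cid H))
  | right _ => 0
  end.

Definition ptrace2 (T1 T2 : finType) (rho : op (T1 * T2)%type) : op T1 :=
  fun a a' => \sum_b rho (a, b) (a', b).
Definition ptrace1 (T1 T2 : finType) (rho : op (T1 * T2)%type) : op T2 :=
  fun b b' => \sum_a rho (a, b) (a, b').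

Definition prob_dist (T : finType) (p : T -> R) : Prop :=
  (forall t, 0 <= p t) /\ \sum_t p t = 1.

Definition cond_dist (X J : finType) (p : X -> J -> R) : Prop :=
  forall x, prob_dist (p x).

Definition unit_vector (d : nat) (v : 'I_d -> C) : Prop :=
  \sum_b v b * (v b)^* = 1.

Section CQC.
Variables (d : nat) (X J : finType) (s : X -> R) (chi : X -> 'I_d -> C)
  (p : X -> J -> R).

(* rho^{ABC} = sum_x s_x |x><x| (x) |chi_x><chi_x| (x) sum_j p(j|x) |j><j|,
   on the space A (x) B (x) C = C^X (x) C^d (x) C^J *)
Definition rhoABC : op ((X * 'I_d) * J)%type :=
  fun u v => if (u.1.1 == v.1.1) && (u.2 == v.2)
             then (s u.1.1 * p u.1.1 u.2)%:C * chi u.1.1 u.1.2 * (chi u.1.1 v.1.2)^*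
             else 0.

Definition rhoAC : op (X * J)%type :=
  fun u v => \sum_b rhoABC ((u.1, b), u.2) ((v.1, b), v.2).
Definition rhoBC : op ('I_d * J)%type :=
  fun u v => \sum_x rhoABC ((x, u.1), u.2) ((x, v.1), v.2).
Definition rhoA : op X := ptrace2 (ptrace2 rhoABC).
Definition rhoC : op J := ptrace1 rhoABC.

Definition mutinf_AC : R :=
  vN_entropy rhoA + vN_entropy rhoC - vN_entropy rhoAC.
Definition cmi_AB_C : R :=
  vN_entropy rhoAC + vN_entropy rhoBC - vN_entropy rhoABC - vN_entropy rhoC.
End CQC.

Definition M_fun (d : nat) (X : finType) (s : X -> R) (chi : X -> 'I_d -> C)
    (r : R) : \bar R :=
  ereal_inf [set z : \bar R | exists (J : finType) (p : X -> J -> R),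
    [/\ cond_dist p, mutinf_AC s chi p <= r & z = (cmi_AB_C s chi p)%:E]].

End Q.

(* Main.v *)
Require Import Defs.
From HB Require Import structures.
From mathcomp Require Import all_boot all_order all_algebra.
From mathcomp Require Import all_classical all_reals.
From mathcomp Require Import constructive_ereal ereal exp.
From mathcomp Require Import complex spectral sesquilinear.
From mathcomp Require Import ring lra.
Import Order.TTheory GRing.Theory Num.Theory.
Local Open Scope ring_scope.
Local Open Scope complex_scope.
Set Implicit Arguments. Unset Strict Implicit. Unset Printing Implicit Defensive.

Section Q.
Variable R : realType.
Local Notation C := R[i].

Definition sqn (z : C) : R := complex.Re z ^+ 2 + complex.Im z ^+ 2.
Lemma sqnE (z : C) : z * z^* = (sqn z)%:C.
Proof. case: z => a b; rewrite /sqn /=; apply/eqP; rewrite eq_complex /=. apply/andP; split; apply/eqP; ring. Qed.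
Lemma sqn_ge0 z : 0 <= sqn z.
Proof. by rewrite /sqn addr_ge0 // sqr_ge0. Qed.
Lemma sqnJ z : sqn (z^*) = sqn z.
Proof. by case: z => a b; rewrite /sqn /= sqrrN. Qed.
Lemma sqn_nat (b : bool) : sqn (b%:R) = b%:R.
Proof. by case: b; rewrite /sqn /= ?expr0n /= ?addr0 ?expr1n. Qed.
Lemma conjcR (x : R) : (x%:C)^* = x%:C.
Proof. exact: conjc_real. Qed.
Lemma RcI (x y : R) : x%:C = y%:C -> x = y.
Proof. exact: complexI. Qed.
Lemma Rc_sum (T : finType) (f : T -> R) : (\sum_i f i)%:C = \sum_i (f i)%:C.
Proof. by rewrite rmorph_sum. Qed.
Lemma RcM (x y : R) : (x * y)%:C = x%:C * y%:C.
Proof. by rewrite rmorphM. Qed.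
Lemma conjc_sum (T : finType) (f : T -> C) : (\sum_i f i)^* = \sum_i (f i)^*.
Proof. by rewrite rmorph_sum. Qed.
Lemma conjcM (x y : C) : (x * y)^* = x^* * y^*.
Proof. by rewrite rmorphM. Qed.
Lemma conjc_natb (b : bool) : (b%:R : C)^* = b%:R.
Proof. by case: b; rewrite ?conjc1 ?conjc0. Qed.
Lemma Rc_nat (b : bool) : ((b%:R : R)%:C) = b%:R.
Proof. by case: b. Qed.

Lemma sum_delta (T : finType) (V : nmodType) (f : T -> V) i :
  \sum_j (if i == j then f j else 0) = f i.
Proof.
rewrite (bigD1 i) //= eqxx big1 ?addr0 // => j; rewrite eq_sym => /negbTE -> //.
Qed.
Lemma sum_deltaC (T : finType) (f : T -> C) i :
  \sum_j (i == j)%:R * f j = f i.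
Proof.
rewrite -[RHS](sum_delta f i); apply: eq_bigr => j _.
by case: eqP => _; rewrite ?mul1r ?mul0r.
Qed.
Lemma sum_deltaR (T : finType) (f : T -> R) i :
  \sum_j (i == j)%:R * f j = f i.
Proof.
rewrite -[RHS](sum_delta f i); apply: eq_bigr => j _.
by case: eqP => _; rewrite ?mul1r ?mul0r.
Qed.

Lemma unitary_col (T : finType) (U : op R T) : unitary U ->
  forall i j, \sum_k (U k i)^* * U k j = (i == j)%:R.
Proof.
move=> hU.
pose n := #|T|.
pose e : 'I_n -> T := enum_val.
have einj : injective e by apply: enum_val_inj.
have sumE : forall f : T -> C, \sum_k f k = \sum_(a < n) f (e a).
  move=> f; rewrite (reindex e) //; apply: onW_bij; exact: enum_val_bij.
pose M : 'M[C]_n := \matrix_(a, b) U (e a) (e b).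
pose B : 'M[C]_n := \matrix_(a, b) (U (e b) (e a))^*.
have hM : M *m B = 1%:M.
  apply/matrixP => a b; rewrite !mxE.
  rewrite (eq_bigr (fun k => U (e a) (e k) * (U (e b) (e k))^*)); last by move=> k _; rewrite !mxE.
  by rewrite -(sumE (fun k => U (e a) k * (U (e b) k)^*)) hU (inj_eq einj).
have := mulmx1C hM => /matrixP hB i j.
have := hB (enum_rank i) (enum_rank j); rewrite mxE [in RHS]mxE (inj_eq enum_rank_inj) => <-.
rewrite (sumE (fun k => (U k i)^* * U k j)).
apply: eq_bigr => k _; rewrite !mxE /e !enum_rankK //.
Qed.

Lemma conjcE (z : C) : z^*%C = z^*%R.
Proof. by []. Qed.

Definition dg (T : finType) (rho V : op R T) (a : T) : C :=
  \sum_i \sum_j (V i a)^* * rho i j * V j a.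

Lemma dg_gen (T K : finType) (W : T -> K -> C) (lam : K -> R) (rho V : op R T) :
  (forall i j, rho i j = \sum_k W i k * (lam k)%:C * (W j k)^*) ->
  forall a, dg rho V a = (\sum_k sqn (\sum_i (V i a)^* * W i k) * lam k)%:C.
Proof.
move=> hr a; rewrite Rc_sum /dg.
transitivity (\sum_i \sum_j \sum_k (V i a)^* * W i k * ((V j a) * (W j k)^*) * (lam k)%:C).
  apply: eq_bigr => i _; apply: eq_bigr => j _; rewrite hr mulr_sumr mulr_suml.
  by apply: eq_bigr => k _; ring.
transitivity (\sum_k \sum_i \sum_j (V i a)^* * W i k * ((V j a) * (W j k)^*) * (lam k)%:C).
  rewrite [RHS]exchange_big; apply: eq_bigr => i _; rewrite [RHS]exchange_big //.
apply: eq_bigr => k _; rewrite RcM -sqnE rmorph_sum /= mulr_suml mulr_suml.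
apply: eq_bigr => i _; rewrite mulr_sumr mulr_suml; apply: eq_bigr => j _.
by rewrite !rmorphM /= conjCK.
Qed.

Lemma parseval (T : finType) (W : op R T) (v : T -> C) : unitary W ->
  \sum_k sqn (\sum_i (v i)^* * W i k) = \sum_i sqn (v i).
Proof.
move=> hW; apply: RcI; rewrite !Rc_sum.
transitivity (\sum_k \sum_i \sum_j (v i)^* * v j * (W i k * (W j k)^*)).
  apply: eq_bigr => k _; rewrite -sqnE rmorph_sum /= mulr_suml; apply: eq_bigr => i _.
  rewrite mulr_sumr; apply: eq_bigr => j _; rewrite !rmorphM /= conjCK; ring.
rewrite exchange_big /=.
transitivity (\sum_i \sum_j (v i)^* * v j * (i == j)%:R).
  apply: eq_bigr => i _; rewrite exchange_big; apply: eq_bigr => j _.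
  by rewrite -mulr_sumr hW.
apply: eq_bigr => i _; rewrite -sqnE.
rewrite (eq_bigr (fun j => (i == j)%:R * ((v i)^* * v j))); last by move=> j _; ring.
by rewrite sum_deltaC mulrC.
Qed.

End Q.

Section S2.
Variable R : realType.

Definition xl (x : R) := x * ln x.

Lemma eqle (x y : R) : x = y -> x <= y.
Proof. by move=> ->. Qed.

Lemma ln_le_sub1 (y : R) : 0 < y -> ln y <= y - 1.
Proof.
move=> y0; have := expR_ge1Dx (ln y); rewrite lnK ?posrE // => h; lra.
Qed.

Lemma Gibbs (x m : R) : 0 <= x -> 0 <= m -> (0 < x -> 0 < m) ->
  x * ln m + x - m <= xl x.
Proof.
move=> x0 m0 h; rewrite /xl.
have [->|xp] := eqVneq x 0; first by rewrite !mul0r; lra.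
have xpos : 0 < x by rewrite lt_def xp x0.
have mpos := h xpos.
have H := ln_le_sub1 (divr_gt0 mpos xpos).
rewrite ln_div ?posrE // in H.
have H2 : x * (ln m - ln x) <= x * (m / x - 1) by apply: ler_wpM2l => //; exact: ltW.
have E : x * (m / x - 1) = m - x by field; rewrite lt0r_neq0.
rewrite E in H2; nra.
Qed.

Lemma jensen (K : finType) (w y : K -> R) : (forall k, 0 <= w k) ->
  (forall k, 0 <= y k) -> \sum_k w k = 1 ->
  xl (\sum_k w k * y k) <= \sum_k w k * xl (y k).
Proof.
move=> w0 y0 hw; set m := \sum_k w k * y k.
have m0 : 0 <= m by apply: sumr_ge0 => k _; exact: mulr_ge0.
have step : forall k, w k * (y k * ln m + y k - m) <= w k * xl (y k).
  move=> k; have [->|wk] := eqVneq (w k) 0; first by rewrite !mul0r.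
  apply: ler_wpM2l => //; apply: Gibbs => // yk.
  have wk0 : 0 < w k by rewrite lt_def wk w0.
  rewrite /m (bigD1 k) //=.
  apply: (@lt_le_trans _ _ (w k * y k)); first exact: mulr_gt0.
  rewrite lerDl; apply: sumr_ge0 => j _; exact: mulr_ge0.
have E : \sum_k w k * (y k * ln m + y k - m) = xl m.
  rewrite (eq_bigr (fun k => w k * y k * ln m + w k * y k - w k * m)); last by move=> k _; ring.
  rewrite sumrB big_split /= -!mulr_suml hw /xl -/m; ring.
rewrite -E; exact: ler_sum.
Qed.

Lemma schur_xl (A K : finType) (P : A -> K -> R) (lam : K -> R) :
  (forall a k, 0 <= P a k) -> (forall k, 0 <= lam k) ->
  (forall a, \sum_k P a k = 1) -> (forall k, \sum_a P a k = 1) ->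
  \sum_a xl (\sum_k P a k * lam k) <= \sum_k xl (lam k).
Proof.
move=> P0 l0 hr hc.
apply: (@le_trans _ _ (\sum_a \sum_k P a k * xl (lam k))).
  by apply: ler_sum => a _; apply: jensen.
rewrite exchange_big /=; apply: eqle; apply: eq_bigr => k _.
by rewrite -mulr_suml hc mul1r.
Qed.

Lemma sub_term (d r c t : R) : 0 <= d -> d <= r -> d <= c -> r <= t ->
  d * ln r + d * ln c - d * ln t + d - r * c / t <= xl d.
Proof.
move=> d0 dr dc rt.
have r0 : 0 <= r by apply: le_trans dr.
have c0 : 0 <= c by apply: le_trans dc.
have t0 : 0 <= t by apply: le_trans rt.
have [->|dp] := eqVneq d 0.
  have := divr_ge0 (mulr_ge0 r0 c0) t0; rewrite /xl !mul0r; lra.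
have dpos : 0 < d by rewrite lt_def dp d0.
have rpos : 0 < r by apply: lt_le_trans dr.
have cpos : 0 < c by apply: lt_le_trans dc.
have tpos : 0 < t by apply: lt_le_trans rt.
have := @Gibbs d (r * c / t) d0 (divr_ge0 (mulr_ge0 r0 c0) t0) (fun _ => divr_gt0 (mulr_gt0 rpos cpos) tpos).
rewrite ln_div ?posrE ?mulr_gt0 // lnM ?posrE //.
move=> h; apply: le_trans h; apply: eqle; ring.
Qed.

Lemma subadd (A B : finType) (D : A -> B -> R) : (forall a b, 0 <= D a b) ->
  \sum_a xl (\sum_b D a b) + \sum_b xl (\sum_a D a b) <=
  \sum_a \sum_b xl (D a b) + xl (\sum_a \sum_b D a b).
Proof.
move=> D0.
set r := fun a => \sum_b D a b.
set c := fun b => \sum_a D a b.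
set t := \sum_a \sum_b D a b.
have Dr : forall a b, D a b <= r a.
  move=> a b; rewrite /r (bigD1 b) //= lerDl; apply: sumr_ge0 => *; exact: D0.
have Dc : forall a b, D a b <= c b.
  move=> a b; rewrite /c (bigD1 a) //= lerDl; apply: sumr_ge0 => *; exact: D0.
have rt : forall a, r a <= t.
  move=> a; rewrite /t (bigD1 a) //= lerDl; apply: sumr_ge0 => a' _; apply: sumr_ge0 => *; exact: D0.
have H := fun a b => sub_term (D0 a b) (Dr a b) (Dc a b) (rt a).
have S : \sum_a \sum_b (D a b * ln (r a) + D a b * ln (c b) - D a b * ln t + D a b - r a * c b / t) <= \sum_a \sum_b xl (D a b).
  by apply: ler_sum => a _; apply: ler_sum => b _; exact: H.
have E1 : \sum_a \sum_b D a b * ln (r a) = \sum_a xl (r a).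
  by apply: eq_bigr => a _; rewrite -mulr_suml.
have E2 : \sum_a \sum_b D a b * ln (c b) = \sum_b xl (c b).
  by rewrite exchange_big; apply: eq_bigr => b _; rewrite -mulr_suml.
have E3 : \sum_a \sum_b D a b * ln t = xl t.
  by rewrite /xl mulr_suml; apply: eq_bigr => a _; rewrite -mulr_suml.
have E4 : \sum_a \sum_b r a * c b / t = t.
  transitivity ((\sum_a r a) * (\sum_b c b) / t).
    rewrite mulr_suml mulr_suml; apply: eq_bigr => a _; rewrite mulr_sumr mulr_suml //.
  have -> : \sum_a r a = t by [].
  have -> : \sum_b c b = t by rewrite /c exchange_big.
  have [->|tn] := eqVneq t 0; first by rewrite !mul0r.
  by rewrite mulfK.
have EE : \sum_a \sum_b (D a b * ln (r a) + D a b * ln (c b) - D a b * ln t + D a b - r a * c b / t) = (\sum_a \sum_b D a b * ln (r a) + \sum_a \sum_b D a b * ln (c b) - \sum_a \sum_b D a b * ln t + \sum_a \sum_b D a b - \sum_a \sum_b r a * c b / t).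
  rewrite (eq_bigr (fun a => \sum_b D a b * ln (r a) + \sum_b D a b * ln (c b) - \sum_b D a b * ln t + \sum_b D a b - \sum_b r a * c b / t)); last by move=> a _; rewrite !(sumrB, big_split).
  by rewrite !(sumrB, big_split).
rewrite EE E1 E2 E3 E4 in S.
have Et : \sum_a \sum_b D a b = t by [].
rewrite Et in S; rewrite /xl in S *; lra.
Qed.

End S2.

Section S3.
Variable R : realType.
Local Notation C := R[i].

Lemma ln2_gt0 : 0 < ln (2 : R).
Proof. by apply: ln_gt0; rewrite ltr1n. Qed.

Lemma etaE (x : R) : 0 <= x -> Defs.eta x = - xl x / ln 2.
Proof.
move=> h2; unfold Defs.eta, xl, log2.
have [_|h1] := ltP 0 x; first by rewrite mulrA mulNr.
have -> : x = 0 by apply/eqP; rewrite eq_le h1 h2.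
by rewrite mul0r oppr0 mul0r.
Qed.

Lemma sum_etaE (T : finType) (f : T -> R) : (forall k, 0 <= f k) ->
  \sum_k Defs.eta (f k) = - (\sum_k xl (f k)) / ln 2.
Proof.
move=> h; transitivity (\sum_k - xl (f k) / ln 2).
  by apply: eq_bigr => k _; rewrite etaE.
by rewrite -mulr_suml sumrN.
Qed.

Lemma sum_eta_le (T1 T2 : finType) (f : T1 -> R) (g : T2 -> R) :
  (forall k, 0 <= f k) -> (forall k, 0 <= g k) ->
  \sum_k xl (g k) <= \sum_k xl (f k) -> \sum_k Defs.eta (f k) <= \sum_k Defs.eta (g k).
Proof.
move=> hf hg h; rewrite !sum_etaE //.
rewrite ler_pM2r ?invr_gt0 ?ln2_gt0 // lerN2 //.
Qed.

Lemma sqn_inj_sum (T : finType) (f : T -> C) (g : T -> R) :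
  (forall i, f i * (f i)^* = (g i)%:C) -> True.
Proof. by []. Qed.

Lemma colnorm (T : finType) (V : op R T) a : unitary V -> \sum_i sqn (V i a) = 1.
Proof.
move=> hV; apply: RcI; rewrite Rc_sum.
have h := unitary_col hV a a; rewrite eqxx in h.
transitivity (true%:R : C); last by [].
rewrite -h; apply: eq_bigr => i _; rewrite -sqnE mulrC //.
Qed.

Lemma conj_inner (T : finType) (v w : T -> C) :
  sqn (\sum_i (v i)^* * w i) = sqn (\sum_i (w i)^* * v i).
Proof.
rewrite -sqnJ rmorph_sum /=; congr sqn; apply: eq_bigr => i _.
by rewrite rmorphM /= !conjcE conjCK mulrC.
Qed.

Definition Pm (T : finType) (V W : op R T) a k := sqn (\sum_i (V i a)^* * W i k).

Lemma Pm_rows (T : finType) (V W : op R T) a : unitary V -> unitary W ->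
  \sum_k Pm V W a k = 1.
Proof. by move=> hV hW; rewrite /Pm parseval // colnorm. Qed.

Lemma Pm_cols (T : finType) (V W : op R T) k : unitary V -> unitary W ->
  \sum_a Pm V W a k = 1.
Proof.
move=> hV hW; rewrite /Pm (eq_bigr (fun a => sqn (\sum_i (W i k)^* * V i a))).
  by rewrite parseval // colnorm.
by move=> a _; rewrite conj_inner.
Qed.

Definition decomp (T : finType) (rho W : op R T) (lam : T -> R) :=
  forall i j, rho i j = \sum_k W i k * (lam k)%:C * (W j k)^*.

Lemma dg_decomp (T : finType) (rho W V : op R T) lam : decomp rho W lam ->
  forall a, dg rho V a = (\sum_k Pm V W a k * lam k)%:C.
Proof. move=> h a; exact: dg_gen. Qed.

Lemma dg_self (T : finType) (rho W : op R T) lam : unitary W -> decomp rho W lam ->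
  forall a, dg rho W a = (lam a)%:C.
Proof.
move=> hW h a; rewrite (dg_decomp W h); congr (_%:C).
rewrite (eq_bigr (fun k => (a == k)%:R * lam k)) ?sum_deltaR //.
move=> k _; rewrite /Pm unitary_col // sqn_nat //.
Qed.

Lemma schur_ent (T : finType) (rho W V : op R T) lam (e : T -> R) :
  unitary W -> unitary V -> decomp rho W lam -> (forall k, 0 <= lam k) ->
  (forall a, dg rho V a = (e a)%:C) ->
  (forall a, 0 <= e a) /\ \sum_a xl (e a) <= \sum_k xl (lam k).
Proof.
move=> hW hV hd hl he.
have ee : forall a, e a = \sum_k Pm V W a k * lam k.
  by move=> a; apply: RcI; rewrite -he (dg_decomp V hd).
split.
  by move=> a; rewrite ee; apply: sumr_ge0 => k _; apply: mulr_ge0 => //; exact: sqn_ge0.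
rewrite (eq_bigr (fun a => xl (\sum_k Pm V W a k * lam k))); last by move=> a _; rewrite ee.
apply: schur_xl => //.
- by move=> a k; exact: sqn_ge0.
- by move=> a; exact: Pm_rows.
- by move=> k; exact: Pm_cols.
Qed.

Lemma vN_spec (T : finType) (rho W : op R T) lam :
  unitary W -> decomp rho W lam -> (forall k, 0 <= lam k) ->
  vN_entropy rho = shannon lam.
Proof.
move=> hW hd hl; rewrite /vN_entropy; case: pselect => [H|nH]; last first.
  by exfalso; apply: nH; exists lam; exists W; split.
case: (cid H) => mu [V [hV hdV]] /=.
have hdV' : decomp rho V mu by [].
have [mu0 le1] := schur_ent hW hV hd hl (dg_self hV hdV').
have [_ le2] := schur_ent hV hW hdV' mu0 (dg_self hW hd).
rewrite /shannon !sum_etaE //; congr (- _ / _).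
by apply/eqP; rewrite eq_le le1 le2.
Qed.

Lemma vN_le (T : finType) (rho W V : op R T) lam (e : T -> R) :
  unitary W -> unitary V -> decomp rho W lam -> (forall k, 0 <= lam k) ->
  (forall a, dg rho V a = (e a)%:C) ->
  vN_entropy rho <= \sum_a Defs.eta (e a).
Proof.
move=> hW hV hd hl he; rewrite (vN_spec hW hd hl).
have [e0 le] := schur_ent hW hV hd hl he.
exact: sum_eta_le.
Qed.

Lemma unitary_id (T : finType) : unitary (fun i k : T => (i == k)%:R : C).
Proof.
move=> i j; rewrite (eq_bigr (fun k => (i == k)%:R * (j == k)%:R)).
  by rewrite sum_deltaC eq_sym.
by move=> k _; rewrite /= rmorph_nat.
Qed.

Lemma vN_diag (T : finType) (rho : op R T) (f : T -> R) :
  (forall i j, rho i j = if i == j then (f i)%:C else 0) -> (forall k, 0 <= f k) ->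
  vN_entropy rho = shannon f.
Proof.
move=> hr hf; apply: (vN_spec (@unitary_id T)) => // i j.
rewrite hr (eq_bigr (fun k => (i == k)%:R * ((f k)%:C * (j == k)%:R))); last first.
  by move=> k _; rewrite /= rmorph_nat mulrA.
by rewrite sum_deltaC; case: (eqVneq i j) => [->|ne]; rewrite ?mulr1 ?mulr0.
Qed.

End S3.

Section S4.
Local Open Scope sesquilinear_scope.
Variable R : realType.
Local Notation C := R[i].

Lemma herm_spectral (d : nat) (A : op R 'I_d) :
  (forall i j, A j i = (A i j)^*%R) ->
  exists U lam, unitary U /\ decomp A U lam.
Proof.
move=> hA.
pose M : 'M[C]_d := \matrix_(i, j) A i j.
have hM : M \is hermsymmx.
  apply/is_hermitianmxP; rewrite expr0 scale1r; apply/matrixP => i j.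
  by rewrite !mxE hA.
have := orthomx_spectralP (hermitian_normalmx hM).
set P := spectralmx M; set D := spectral_diag M.
have hP : P \is unitarymx by exact: spectral_unitarymx.
rewrite invmx_unitary // => hE.
have hPP : P^t* *m P = 1%:M by apply: mulmx1C; apply/unitarymxP.
have Dr : forall k, D 0 k = (complex.Re (D 0 k))%:C.
  move=> k; rewrite RRe_real //.
  by have /mxOverP := hermitian_spectral_diag_real hM; apply.
exists (fun i k => (P k i)^*%R), (fun k => complex.Re (D 0 k)); split.
  move=> i j; have /matrixP/(_ i j) := hPP; rewrite !mxE => <-.
  by apply: eq_bigr => k _; rewrite !mxE conjCK.
move=> i j; have /matrixP/(_ i j) := hE; rewrite mul_mx_diag !mxE => ->.
apply: eq_bigr => k _; rewrite !mxE -Dr conjCK //.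
Qed.

Lemma complete_unit (n : nat) (chi : 'I_n.+1 -> C) :
  \sum_b chi b * (chi b)^*%R = 1 ->
  exists V : op R 'I_n.+1, unitary V /\
    forall b b', V b ord0 * (V b' ord0)^*%R = chi b * (chi b')^*%R.
Proof.
move=> hchi.
pose A : 'M[C]_n.+1 := \matrix_(i, j) (if i == ord0 then chi j else 0).
set B := schmidt A.
have hB : B \is unitarymx by apply: schmidt_unitarymx.
have hBB : B^t* *m B = 1%:M by apply: mulmx1C; apply/unitarymxP.
have hsub := row_schmidt_sub A ord0.
rewrite (big_pred1 ord0) ?genmxE in hsub; last by move=> k; rewrite /= leqn0.
have [c hc] := sub_rVP hsub.
have hchik : forall k, chi k = c * B ord0 k.
  move=> k; have /matrixP/(_ 0 k) := hc; rewrite !mxE eqxx //.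
have hBrow : \sum_k B ord0 k * (B ord0 k)^*%R = 1.
  have /matrixP/(_ ord0 ord0) := unitarymxP hB; rewrite !mxE eqxx mulr1n => <-.
  by apply: eq_bigr => k _; rewrite !mxE.
have hcc : c * c^*%R = 1.
  rewrite -hchi -[LHS]mulr1 -hBrow mulr_sumr; apply: eq_bigr => k _.
  by rewrite !hchik rmorphM; ring.
exists (fun i k => B k i); split.
  move=> i j.
  have /matrixP/(_ i j) := hBB; rewrite !mxE => h.
  have h2 := congr1 (fun z => z^*%R) h; rewrite rmorph_sum rmorph_nat in h2.
  rewrite -h2; apply: eq_bigr => k _; rewrite !mxE rmorphM /= conjCK //.
move=> b b'; rewrite !hchik rmorphM /=.
transitivity ((c * c^*%R) * (B ord0 b * (B ord0 b')^*%R)); first by rewrite hcc mul1r.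
ring.
Qed.

End S4.

Section S5.
Variable R : realType.
Local Notation C := R[i].

Lemma sum_pair (V : nmodType) (A B : finType) (F : A * B -> V) :
  \sum_k F k = \sum_a \sum_b F (a, b).
Proof. by rewrite pair_big; apply: eq_bigr => -[a b]. Qed.

Lemma eta0 : Defs.eta (0 : R) = 0.
Proof. by rewrite /Defs.eta ltxx. Qed.

Variables (d : nat) (X J : finType) (s : X -> R) (chi : X -> 'I_d -> C) (q : X -> J -> R).
Hypothesis hs : forall x, 0 <= s x.
Hypothesis hchi : forall x, \sum_b chi x b * (chi x b)^*%R = 1.
Hypothesis hq : cond_dist q.

Lemma q_ge0 x j : 0 <= q x j. Proof. by case: (hq x). Qed.
Lemma q_sum x : \sum_j q x j = 1. Proof. by case: (hq x). Qed.
Lemma sq_ge0 x j : 0 <= s x * q x j. Proof. by rewrite mulr_ge0 ?q_ge0. Qed.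

Lemma S_A : vN_entropy (rhoA s chi q) = \sum_x Defs.eta (s x).
Proof.
apply: vN_diag => // x x'; rewrite /rhoA /ptrace2 /rhoABC /=.
have [e|ne] := eqVneq x x'; last first.
    by apply: big1 => b _; apply: big1.
subst x'.
transitivity (\sum_j \sum_b (s x * q x j)%:C * (chi x b * (chi x b)^*%R)).
  rewrite exchange_big; apply: eq_bigr => b _; apply: eq_bigr => j _.
  by rewrite !eqxx /= mulrA.
rewrite (eq_bigr (fun j => (s x * q x j)%:C)); last by move=> j _; rewrite -mulr_sumr hchi mulr1.
by rewrite -Rc_sum -mulr_sumr q_sum mulr1.
Qed.

Lemma S_C : vN_entropy (rhoC s chi q) = \sum_j Defs.eta (\sum_x s x * q x j).
Proof.
apply: vN_diag => [j j'|j]; last by apply: sumr_ge0 => x _; exact: sq_ge0.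
rewrite /rhoC /ptrace1 /rhoABC /= sum_pair.
have [e|ne] := eqVneq j j'; last first.
  by apply: big1 => x _; apply: big1 => b _; rewrite andbF.
subst j'.
rewrite Rc_sum; apply: eq_bigr => x _.
rewrite (eq_bigr (fun b => (s x * q x j)%:C * (chi x b * (chi x b)^*%R))); last first.
  by move=> b _; rewrite /= !eqxx /= mulrA.
by rewrite -mulr_sumr hchi mulr1.
Qed.

Lemma S_AC : vN_entropy (rhoAC s chi q) = \sum_x \sum_j Defs.eta (s x * q x j).
Proof.
rewrite (vN_diag (f := fun u : X * J => s u.1 * q u.1 u.2)).
- by rewrite /shannon sum_pair.
- move=> [x j] [x' j']; rewrite /rhoAC /rhoABC /= xpair_eqE.
  case: ifP => h; last by apply: big1.
  move/andP: h => [/eqP e1 /eqP e2]; subst x' j'.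
  rewrite (eq_bigr (fun b => (s x * q x j)%:C * (chi x b * (chi x b)^*%R))).
    by rewrite -mulr_sumr hchi mulr1.
  by move=> b _; rewrite mulrA.
- by move=> [x j]; exact: sq_ge0.
Qed.

End S5.

Section GB.
Variable R : realType.
Local Notation C := R[i].
Variables (I Y T : finType) (e : Y * T -> I) (blk : I -> Y) (inn : I -> T).
Hypotheses (eb : forall p, blk (e p) = p.1) (ei : forall p, inn (e p) = p.2)
  (ek : forall k, e (blk k, inn k) = k).

Lemma sum_e (V : nmodType) (F : I -> V) : \sum_k F k = \sum_y \sum_t F (e (y, t)).
Proof.
rewrite (reindex e); first by rewrite sum_pair.
exists (fun k => (blk k, inn k)) => [p _|k _]; last exact: ek.
by case: p => y t; rewrite eb ei.
Qed.

Lemma blk_eq u v : (u == v) = (blk u == blk v) && (inn u == inn v).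
Proof.
apply/eqP/andP => [->|[/eqP h1 /eqP h2]]; first by split.
by rewrite -(ek u) -(ek v) h1 h2.
Qed.

Lemma conjM_nat (b : bool) (z : C) : ((b%:R * z)^*)%R = b%:R * z^*%R.
Proof. by case: b; rewrite ?mul1r ?mul0r ?rmorph0. Qed.

Definition bW (V : Y -> op R T) : op R I :=
  fun u k => (blk u == blk k)%:R * V (blk u) (inn u) (inn k).

Lemma bW_unitary V : (forall y, unitary (V y)) -> unitary (bW V).
Proof.
move=> hV u u'; rewrite sum_e /bW.
transitivity (\sum_y (blk u == y)%:R * ((blk u' == y)%:R *
    \sum_t V (blk u) (inn u) t * (V (blk u') (inn u') t)^*%R)).
  apply: eq_bigr => y _; rewrite !mulr_sumr; apply: eq_bigr => t _.
  rewrite !eb !ei /= conjM_nat; ring.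
rewrite sum_deltaC blk_eq eq_sym.
case: (eqVneq (blk u) (blk u')) => [h|h]; last by rewrite mul0r.
by rewrite -h hV mul1r.
Qed.

Lemma bW_decomp (rho : op R I) (sig V : Y -> op R T) (mu : Y -> T -> R) :
  (forall u v, rho u v = (blk u == blk v)%:R * sig (blk u) (inn u) (inn v)) ->
  (forall y, decomp (sig y) (V y) (mu y)) ->
  decomp rho (bW V) (fun k => mu (blk k) (inn k)).
Proof.
move=> hr hd u v; rewrite hr sum_e /bW.
transitivity (\sum_y (blk u == y)%:R * ((blk v == y)%:R *
    \sum_t V (blk u) (inn u) t * (mu y t)%:C * (V (blk v) (inn v) t)^*%R)); last first.
  apply: eq_bigr => y _; rewrite !mulr_sumr; apply: eq_bigr => t _.
  rewrite !eb !ei /= conjM_nat; ring.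
rewrite sum_deltaC eq_sym.
case: (eqVneq (blk u) (blk v)) => [h|h]; last by rewrite !mul0r.
by rewrite -h hd !mul1r.
Qed.

Lemma bW_dg (rho : op R I) (sig V : Y -> op R T) :
  (forall u v, rho u v = (blk u == blk v)%:R * sig (blk u) (inn u) (inn v)) ->
  forall y t, dg rho (bW V) (e (y, t)) = dg (sig y) (V y) t.
Proof.
move=> hr y t; rewrite /dg sum_e /bW.
transitivity (\sum_y1 (y == y1)%:R * \sum_t1 \sum_y2 \sum_t2
   (y1 == y2)%:R * ((V y1 t1 t)^*%R * sig y1 t1 t2 * ((y2 == y)%:R * V y2 t2 t))).
  apply: eq_bigr => y1 _; rewrite mulr_sumr; apply: eq_bigr => t1 _.
  rewrite sum_e mulr_sumr; apply: eq_bigr => y2 _; rewrite mulr_sumr; apply: eq_bigr => t2 _.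
  rewrite hr !eb !ei /= conjM_nat [(y == y1)]eq_sym; ring.
rewrite sum_deltaC; apply: eq_bigr => t1 _.
transitivity (\sum_y2 (y == y2)%:R * \sum_t2 ((V y t1 t)^*%R * sig y t1 t2 * V y t2 t)).
  apply: eq_bigr => y2 _; rewrite mulr_sumr; apply: eq_bigr => t2 _.
  case: (eqVneq y y2) => [<-|h]; first by rewrite ?eqxx !mul1r.
  by rewrite !mulr0n !mul0r.
by rewrite sum_deltaC.
Qed.

Lemma shannon_bW (mu : Y -> T -> R) :
  shannon (fun k => mu (blk k) (inn k)) = \sum_y \sum_t Defs.eta (mu y t).
Proof.
rewrite /shannon sum_e; apply: eq_bigr => y _; apply: eq_bigr => t _.
by rewrite eb ei.
Qed.

End GB.

Section S7.
Variable R : realType.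
Local Notation C := R[i].
Variables (d : nat) (X J : finType) (s : X -> R) (chi : X -> 'I_d -> C) (q : X -> J -> R).
Hypothesis hs : forall x, 0 <= s x.
Hypothesis hchi : forall x, \sum_b chi x b * (chi x b)^*%R = 1.
Hypothesis hq : cond_dist q.

Lemma conjCR (x : R) : ((x%:C)^*)%R = x%:C :> C.
Proof. exact: conjc_real. Qed.

Lemma cM (x y : C) : ((x * y)^*)%R = (x^*)%R * (y^*)%R.
Proof. exact: rmorphM. Qed.

Lemma cS (T : finType) (f : T -> C) : ((\sum_i f i)^*)%R = \sum_i (f i)^*%R.
Proof. exact: rmorph_sum. Qed.

Definition sigBC (j : J) : op R 'I_d :=
  fun b b' => \sum_x (s x * q x j)%:C * chi x b * (chi x b')^*%R.

Definition eBC (V : J -> op R 'I_d) j b :=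
  \sum_x sqn (\sum_i (V j i b)^*%R * chi x i) * (s x * q x j).

Lemma eBC_ge0 V j b : 0 <= eBC V j b.
Proof.
apply: sumr_ge0 => x _; apply: mulr_ge0; first exact: sqn_ge0.
by apply: mulr_ge0 => //; case: (hq x) => h _; exact: h.
Qed.

Lemma BC_dg (V : J -> op R 'I_d) j b : dg (sigBC j) (V j) b = (eBC V j b)%:C.
Proof.
rewrite (@dg_gen _ _ _ (fun i x => chi x i) (fun x => s x * q x j)) //.
by move=> i i'; apply: eq_bigr => x _; ring.
Qed.

Lemma BC_exists : exists Wf : J -> op R 'I_d,
  (forall j, unitary (Wf j)) /\ forall j, decomp (sigBC j) (Wf j) (eBC Wf j).
Proof.
have H : forall j, exists W, unitary W /\ exists lam, decomp (sigBC j) W lam.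
  move=> j; have [|U [lam [hU hd]]] := @herm_spectral R d (sigBC j).
    move=> i i'; rewrite /sigBC cS; apply: eq_bigr => x _.
    rewrite !cM conjCK conjCR; ring.
  by exists U; split => //; exists lam.
have /choice [Wf hW] := H.
exists Wf; split => [j|j]; first by case: (hW j).
case: (hW j) => hu [lam hd].
have el : forall b, lam b = eBC Wf j b.
  by move=> b; apply: RcI; rewrite -(dg_self hu hd) BC_dg.
by move=> i i'; rewrite hd; apply: eq_bigr => k _; rewrite el.
Qed.

Let eI : 'I_d * J -> 'I_d * J := fun p => p.
Lemma rhoBC_blk (u v : 'I_d * J) :
  rhoBC s chi q u v = (u.2 == v.2)%:R * sigBC u.2 u.1 v.1.
Proof.
rewrite /rhoBC /rhoABC /sigBC /= mulr_sumr; apply: eq_bigr => x _.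
rewrite eqxx /=; case: (u.2 == v.2); rewrite ?mul1r ?mulr0n ?mul0r //.
Qed.

Let blkBC (u : 'I_d * J) := u.2.
Let innBC (u : 'I_d * J) := u.1.
Let eBCi (p : J * 'I_d) : 'I_d * J := (p.2, p.1).
Let ebBC : forall p, blkBC (eBCi p) = p.1. Proof. by []. Qed.
Let eiBC : forall p, innBC (eBCi p) = p.2. Proof. by []. Qed.
Let ekBC : forall k, eBCi (blkBC k, innBC k) = k. Proof. by case. Qed.

Lemma rhoBC_blk' (u v : 'I_d * J) :
  rhoBC s chi q u v = (blkBC u == blkBC v)%:R * sigBC (blkBC u) (innBC u) (innBC v).
Proof. exact: rhoBC_blk. Qed.

Lemma S_BC_eq : exists Wf : J -> op R 'I_d, (forall j, unitary (Wf j)) /\ vN_entropy (rhoBC s chi q) = \sum_j \sum_b Defs.eta (eBC Wf j b).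
Proof.
have [Wf [hu hd]] := BC_exists.
exists Wf; split => //.
rewrite (vN_spec (bW_unitary ebBC eiBC ekBC hu) (bW_decomp ebBC eiBC ekBC rhoBC_blk' hd)).
  exact: (shannon_bW ebBC eiBC ekBC).
by move=> k; exact: eBC_ge0.
Qed.

Lemma S_BC_le (V : J -> op R 'I_d) : (forall j, unitary (V j)) ->
  vN_entropy (rhoBC s chi q) <= \sum_j \sum_b Defs.eta (eBC V j b).
Proof.
move=> hV; have [Wf [hu hd]] := BC_exists.
have := @vN_le R _ (rhoBC s chi q) (bW blkBC innBC Wf) (bW blkBC innBC V) _
  (fun a => eBC V (blkBC a) (innBC a)) (bW_unitary ebBC eiBC ekBC hu) (bW_unitary ebBC eiBC ekBC hV)
  (bW_decomp ebBC eiBC ekBC rhoBC_blk' hd) (fun k => eBC_ge0 Wf (blkBC k) (innBC k)).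
rewrite (sum_e ebBC eiBC ekBC); apply.
move=> a; rewrite -(ekBC a) (bW_dg ebBC eiBC ekBC V rhoBC_blk') BC_dg //.
Qed.

End S7.

Section S7b.
Variable R : realType.
Local Notation C := R[i].
Variables (n : nat) (X J : finType) (s : X -> R) (chi : X -> 'I_n.+1 -> C) (q : X -> J -> R).
Hypothesis hs : forall x, 0 <= s x.
Hypothesis hchi : forall x, \sum_b chi x b * (chi x b)^*%R = 1.
Hypothesis hq : cond_dist q.

Let blkA (u : (X * 'I_n.+1) * J) : X * J := (u.1.1, u.2).
Let innA (u : (X * 'I_n.+1) * J) : 'I_n.+1 := u.1.2.
Let eA (p : (X * J) * 'I_n.+1) : (X * 'I_n.+1) * J := ((p.1.1, p.2), p.1.2).
Let ebA : forall p, blkA (eA p) = p.1. Proof. by case=> -[]. Qed.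
Let eiA : forall p, innA (eA p) = p.2. Proof. by []. Qed.
Let ekA : forall k, eA (blkA k, innA k) = k. Proof. by case=> -[]. Qed.

Definition sigA (y : X * J) : op R 'I_n.+1 :=
  fun b b' => (s y.1 * q y.1 y.2)%:C * chi y.1 b * (chi y.1 b')^*%R.

Lemma rhoABC_blk u v :
  rhoABC s chi q u v = (blkA u == blkA v)%:R * sigA (blkA u) (innA u) (innA v).
Proof.
rewrite /rhoABC /sigA /blkA /innA xpair_eqE /=.
case: ifP => h; first by rewrite mul1r.
by rewrite mulr0n mul0r.
Qed.

Definition muA (y : X * J) (b : 'I_n.+1) : R :=
  if b == ord0 then s y.1 * q y.1 y.2 else 0.

Lemma S_ABC : vN_entropy (rhoABC s chi q) = \sum_x \sum_j Defs.eta (s x * q x j).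
Proof.
have /choice [Vf hV] := fun x => complete_unit (hchi x).
have hd : forall y, decomp (sigA y) (Vf y.1) (muA y).
  move=> y b b'; rewrite (bigD1 ord0) //= big1 ?addr0.
    rewrite /muA eqxx /sigA [RHS]mulrAC (proj2 (hV y.1)); ring.
  by move=> k /negbTE hk; rewrite /muA hk mulr0 mul0r.
have hu : forall y : X * J, unitary (Vf y.1) by move=> y; case: (hV y.1).
rewrite (vN_spec (bW_unitary ebA eiA ekA hu) (bW_decomp ebA eiA ekA rhoABC_blk hd)).
  rewrite (shannon_bW ebA eiA ekA) sum_pair; apply: eq_bigr => x _; apply: eq_bigr => j _.
  rewrite (bigD1 ord0) //= big1 ?addr0; first by rewrite /muA eqxx.
  by move=> k /negbTE hk; rewrite /muA hk eta0.
move=> k; rewrite /muA; case: ifP => _ //.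
exact: mulr_ge0 (hs _) (q_ge0 hq _ _).
Qed.

End S7b.

Section S8.
Variable R : realType.
Local Notation C := R[i].

Lemma cS' (T : finType) (f : T -> C) : ((\sum_i f i)^*)%R = \sum_i (f i)^*%R.
Proof. exact: rmorph_sum. Qed.
Lemma cM' (x y : C) : ((x * y)^*)%R = (x^*)%R * (y^*)%R.
Proof. exact: rmorphM. Qed.

Lemma unit_sqn (T : finType) (v : T -> C) :
  \sum_b v b * (v b)^*%R = (\sum_b sqn (v b))%:C.
Proof. by rewrite Rc_sum; apply: eq_bigr => b _; rewrite sqnE. Qed.

Lemma unitary_dag_mul (T : finType) (A B : op R T) : unitary A -> unitary B ->
  unitary (fun i k => \sum_c (A c i)^*%R * B c k).
Proof.
move=> hA hB i j.
transitivity (\sum_c \sum_c' ((A c i)^*%R * A c' j) * \sum_k B c k * (B c' k)^*%R).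
  transitivity (\sum_k \sum_c \sum_c' ((A c i)^*%R * A c' j) * (B c k * (B c' k)^*%R)).
    apply: eq_bigr => k _; rewrite cS' mulr_suml; apply: eq_bigr => c _.
    rewrite mulr_sumr; apply: eq_bigr => c' _; rewrite cM' conjCK; ring.
  rewrite exchange_big; apply: eq_bigr => c _; rewrite exchange_big; apply: eq_bigr => c' _.
  by rewrite mulr_sumr.
rewrite -(unitary_col hA i j); apply: eq_bigr => c _.
rewrite (eq_bigr (fun c' => (c == c')%:R * ((A c i)^*%R * A c' j))); last first.
  by move=> c' _; rewrite hB mulrC.
by rewrite sum_deltaC.
Qed.

Lemma xl_mul (x y : R) : 0 <= x -> 0 <= y -> xl (x * y) = y * xl x + x * xl y.
Proof.
move=> x0 y0; rewrite /xl.
have [->|xn] := eqVneq x 0; first by rewrite !(mul0r, mulr0, addr0, add0r).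
have [->|yn] := eqVneq y 0; first by rewrite !(mul0r, mulr0, addr0, add0r).
have xp : 0 < x by rewrite lt_def xn x0.
have yp : 0 < y by rewrite lt_def yn y0.
rewrite lnM ?posrE //; ring.
Qed.

Lemma eta_mul (x y : R) : 0 <= x -> 0 <= y -> Defs.eta (x * y) = y * Defs.eta x + x * Defs.eta y.
Proof.
move=> x0 y0; rewrite !etaE ?mulr_ge0 // xl_mul //; ring.
Qed.

Lemma sum2_etaE (A B : finType) (f : A -> B -> R) : (forall a b, 0 <= f a b) ->
  \sum_a \sum_b Defs.eta (f a b) = - (\sum_a \sum_b xl (f a b)) / ln 2.
Proof.
move=> h; transitivity (\sum_a - (\sum_b xl (f a b)) / ln 2).
  by apply: eq_bigr => a _; rewrite sum_etaE.
by rewrite -mulr_suml sumrN.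
Qed.

Lemma M1_core (K J : finType) (a : K -> R) (D : J -> K -> R) :
  (forall j k, 0 <= D j k) -> (forall k, \sum_j D j k = a k) -> \sum_k a k = 1 ->
  \sum_j \sum_k Defs.eta (D j k) <= \sum_k Defs.eta (a k) + \sum_j Defs.eta (\sum_k D j k).
Proof.
move=> D0 hD ha.
have h := subadd D0.
have hT : \sum_j \sum_k D j k = 1 by rewrite exchange_big -ha; apply: eq_bigr => k _; rewrite hD.
rewrite hT /xl ln1 mulr0 addr0 in h.
have a0 : forall k, 0 <= a k by move=> k; rewrite -hD; apply: sumr_ge0 => j _; exact: D0.
have S0 : forall j, 0 <= \sum_k D j k by move=> j; apply: sumr_ge0 => k _; exact: D0.
rewrite sum2_etaE // !sum_etaE //.
have E : \sum_k xl (\sum_j D j k) = \sum_k xl (a k).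
  by apply: eq_bigr => k _; rewrite hD.
rewrite E in h.
rewrite /xl in h *.
rewrite -mulrDl ler_pM2r ?invr_gt0 ?ln2_gt0 //; lra.
Qed.

Lemma M2_core (K B : finType) (e : K -> B -> R) : (forall k b, 0 <= e k b) ->
  \sum_k \sum_b Defs.eta (e k b) - \sum_k Defs.eta (\sum_b e k b) <=
  \sum_b Defs.eta (\sum_k e k b) - Defs.eta (\sum_k \sum_b e k b).
Proof.
move=> e0; have h := subadd e0.
have S1 : forall k, 0 <= \sum_b e k b by move=> k; apply: sumr_ge0 => b _; exact: e0.
have S2 : forall b, 0 <= \sum_k e k b by move=> b; apply: sumr_ge0 => k _; exact: e0.
have S3 : 0 <= \sum_k \sum_b e k b by apply: sumr_ge0 => k _; exact: S1.
rewrite sum2_etaE // !sum_etaE // etaE //.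
rewrite /xl in h *.
have c0 : 0 < (ln (2:R))^-1 by rewrite invr_gt0 ln2_gt0.
nra.
Qed.

End S8.

Lemma sqnJ' (R : realType) (z : R[i]) : sqn (z^*%R) = sqn z.
Proof. exact: sqnJ. Qed.

Unset Implicit Arguments.
Set Strict Implicit.
Theorem proposition5p2 (R : realType) (d : nat) (I K : finType)
  (p : I -> R) (phi : I -> 'I_d -> R[i]) (a : K -> R) (U : K -> op R 'I_d) :
  prob_dist p ->
  (forall i, unit_vector (phi i)) ->
  prob_dist a ->
  (forall k, unitary (U k)) ->
  forall r : R, 0 <= r ->
  (M_fun p phi r <=
   M_fun (fun ik : (I * K)%type => (p ik.1 * a ik.2)%R)
         (fun ik : (I * K)%type => fun b => (\sum_c U ik.2 b c * phi ik.1 c)%R) r)%E.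
Proof.
move=> [p0 p1] hphi [a0 a1] hU r hr.
move: phi U hphi hU; case: d => [|n] phi U hphi hU.
  exfalso; case: (pickP (fun _ : I => true)) => [i _|h].
    by have := hphi i; rewrite /unit_vector big_ord0 => /eqP; rewrite eq_sym oner_eq0.
  by move: p1; rewrite big1 // => [/eqP|i _]; [rewrite eq_sym oner_eq0 | have := h i].
set sF := fun ik : I * K => p ik.1 * a ik.2.
set chiF := fun ik : I * K => fun b => \sum_c U ik.2 b c * phi ik.1 c.
have hphi' : forall i, \sum_b phi i b * (phi i b)^*%R = 1 by move=> i; exact: hphi.
have hsF : forall ik, 0 <= sF ik by move=> ik; exact: mulr_ge0.
have hchiF : forall ik, \sum_b chiF ik b * (chiF ik b)^*%R = 1.
  move=> [i k]; rewrite unit_sqn.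
  have hW : unitary (fun c b => (U k b c)^*%R : R[i]).
    move=> c c'; rewrite -(unitary_col (hU k) c c'); apply: eq_bigr => b _.
    by rewrite ?conjcE conjCK.
  have := parseval (phi i) hW.
  have -> : \sum_c sqn (phi i c) = 1 by apply: RcI; rewrite -unit_sqn hphi'.
  move=> h; transitivity ((1:R)%:C); last by [].
  rewrite -h; congr (_%:C); apply: eq_bigr => b _; rewrite -sqnJ' /chiF cS'.
  by congr sqn; apply: eq_bigr => c _; rewrite cM' mulrC.
apply: le_ereal_inf_tmp => z [J [qF [hqF hmF ->]]].
pose q' : I -> (J * K) -> R := fun i jk => a jk.2 * qF (i, jk.2) jk.1.
have hq' : cond_dist q'.
  move=> i; split => [jk|]; first by apply: mulr_ge0 => //; exact: (q_ge0 hqF).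
  rewrite sum_pair exchange_big /= -[RHS]a1; apply: eq_bigr => k _.
  by rewrite /q' /= -mulr_sumr (q_sum hqF) mulr1.
pose D := fun j k => \sum_i p i * q' i (j, k).
have D0 : forall j k, 0 <= D j k.
  by move=> j k; apply: sumr_ge0 => i _; apply: mulr_ge0 => //; apply: mulr_ge0 => //; exact: (q_ge0 hqF).
have hD : forall k, \sum_j D j k = a k.
  move=> k; rewrite exchange_big /= -[RHS]mulr1 -p1 mulr_sumr; apply: eq_bigr => i _.
  rewrite /q' /= (eq_bigr (fun j => p i * a k * qF (i, k) j)); last by move=> j _; ring.
  by rewrite -mulr_sumr (q_sum hqF) mulr1 mulrC.
have e1 : \sum_jk Defs.eta (\sum_i p i * q' i jk) = \sum_j \sum_k Defs.eta (D j k).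
  by rewrite sum_pair.
have e2 : \sum_j Defs.eta (\sum_ik sF ik * qF ik j) = \sum_j Defs.eta (\sum_k D j k).
  apply: eq_bigr => j _; congr Defs.eta; rewrite sum_pair exchange_big /=.
  apply: eq_bigr => k _; apply: eq_bigr => i _; rewrite /sF /q' /=; ring.
have M1 : mutinf_AC p phi q' <= mutinf_AC sF chiF qF.
  rewrite /mutinf_AC (S_A p0 hphi' hq') (S_C p0 hphi' hq') (S_AC p0 hphi' hq').
  rewrite (S_A hsF hchiF hqF) (S_C hsF hchiF hqF) (S_AC hsF hchiF hqF).
  have e3 : \sum_ik \sum_j Defs.eta (sF ik * qF ik j) = \sum_i \sum_jk Defs.eta (p i * q' i jk).
    rewrite sum_pair; apply: eq_bigr => i _; rewrite sum_pair exchange_big /=.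
    apply: eq_bigr => k _; apply: eq_bigr => j _; rewrite /sF /q' /=; congr Defs.eta; ring.
  have e4 : \sum_ik Defs.eta (sF ik) = \sum_i Defs.eta (p i) + \sum_k Defs.eta (a k).
    rewrite sum_pair.
    rewrite (eq_bigr (fun i => Defs.eta (p i) + p i * \sum_k Defs.eta (a k))); last first.
      move=> i _; rewrite /sF /= (eq_bigr (fun k => a k * Defs.eta (p i) + p i * Defs.eta (a k))); last first.
        by move=> k _; rewrite eta_mul.
      by rewrite big_split /= -mulr_suml a1 mul1r -mulr_sumr.
    by rewrite big_split /= -mulr_suml p1 mul1r.
  have hM := M1_core D0 hD a1.
  rewrite e1 e2 e3 e4; lra.
have M2 : cmi_AB_C p phi q' <= cmi_AB_C sF chiF qF.
  have [Wf [hWf hBCF]] := S_BC_eq chiF hsF hqF.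
  pose V := fun jk : J * K => fun m b : 'I_n.+1 => \sum_c (U jk.2 c m)^*%R * Wf jk.1 c b.
  have hV : forall jk, unitary (V jk) by move=> jk; exact: unitary_dag_mul.
  have hBCE := S_BC_le phi p0 hq' hV.
  pose e3 := fun j k b => eBC p phi q' V (j, k) b.
  have e30 : forall j k b, 0 <= e3 j k b by move=> j k b; exact: eBC_ge0.
  have inner : forall j k b i, \sum_m (V (j,k) m b)^*%R * phi i m =
      \sum_m (Wf j m b)^*%R * chiF (i,k) m.
    move=> j k b i; rewrite /V /chiF /=.
    transitivity (\sum_m \sum_c U k c m * (Wf j c b)^*%R * phi i m).
      apply: eq_bigr => m _; rewrite cS' mulr_suml; apply: eq_bigr => c _.
      by rewrite cM' conjCK.
    rewrite exchange_big; apply: eq_bigr => c _; rewrite mulr_sumr; apply: eq_bigr => m _; ring.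
  have heF : forall j b, eBC sF chiF qF Wf j b = \sum_k e3 j k b.
    move=> j b; rewrite /eBC /e3 sum_pair exchange_big /=.
    apply: eq_bigr => k _; apply: eq_bigr => i _.
    by rewrite inner /sF /q' /= [X in _ = _ * X]mulrA.
  have he3 : forall j k, \sum_b e3 j k b = D j k.
    move=> j k; rewrite /e3 /eBC exchange_big /=; apply: eq_bigr => i _.
    rewrite -mulr_suml.
    have -> : \sum_b sqn (\sum_m (V (j, k) m b)^*%R * phi i m) = 1.
      rewrite (eq_bigr (fun b => sqn (\sum_m (phi i m)^*%R * V (j, k) m b))); last first.
        by move=> b _; rewrite conj_inner.
      rewrite parseval //; apply: RcI; rewrite -unit_sqn hphi'.
      by [].
    by rewrite mul1r.
  have key : \sum_j (\sum_k \sum_b Defs.eta (e3 j k b) - \sum_k Defs.eta (D j k)) <=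
             \sum_j (\sum_b Defs.eta (\sum_k e3 j k b) - Defs.eta (\sum_k D j k)).
    apply: ler_sum => j _; have := M2_core (e30 j).
    have E1 : \sum_k Defs.eta (\sum_b e3 j k b) = \sum_k Defs.eta (D j k).
      by apply: eq_bigr => k _; rewrite he3.
    have E2 : \sum_k \sum_b e3 j k b = \sum_k D j k.
      by apply: eq_bigr => k _; exact: he3.
    by rewrite E1 E2.
  rewrite !sumrB in key.
  have hE2 : \sum_jk \sum_b Defs.eta (eBC p phi q' V jk b) = \sum_j \sum_k \sum_b Defs.eta (e3 j k b).
    by rewrite sum_pair.
  have hF : \sum_j \sum_b Defs.eta (eBC sF chiF qF Wf j b) = \sum_j \sum_b Defs.eta (\sum_k e3 j k b).
    by apply: eq_bigr => j _; apply: eq_bigr => b _; rewrite heF.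
  rewrite hE2 in hBCE.
  rewrite /cmi_AB_C (S_AC p0 hphi' hq') (S_ABC p0 hphi' hq') (S_C p0 hphi' hq').
  rewrite (S_AC hsF hchiF hqF) (S_ABC hsF hchiF hqF) (S_C hsF hchiF hqF) hBCF.
  rewrite e1 e2 hF; lra.
apply: le_trans (ereal_inf_lbound _) _.
  exists (J * K)%type, q'; split => //; exact: le_trans M1 hmF.
by rewrite lee_fin.
Qed.
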